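(* In $TTR$, if $\Gamma,x:A\vdash_{TTR}(x)u_1\dots u_n:B$, then either $n=0$ and there is a sequence of variables $\mathbf v_0$ not free in $A$ and $\Gamma$ such that $\forall\mathbf v_0A\subseteq B$; or $n\ge1$ and there are types $C_i,B_i$ ($1\le i\le n$) and sequences of variables $\mathbf v_i$ ($0\le i\le n$) not free in $A$ and $\Gamma$, such that $\forall\mathbf v_0A\subseteq C_1\to B_1$, $\forall\mathbf v_iB_i\subseteq C_{i+1}\to B_{i+1}$ for $1\le i\le n-1$, $\forall\mathbf v_nB_n\subseteq B$, and $\Gamma,x:A\vdash_{TTR}u_i:C_i$ for $1\le i\le n$.
   Context: $TTR$ is the type system whose types are built over a second-order language (first-order variables, function symbols, $n$-ary predicate variables and symbols) with a fixed system $\mathbf E$ of equations: atomic $\perp$ and $X(t_1,\dots,t_n)$; $A\to B$, $\forall xA$, $\forall XA$, and $\mu Cx_1\dots x_nA\langle t_1,\dots,t_n\rangle$ for $C$ an $n$-ary predicate symbol occurring and positive in $A$. Subtyping $\subseteq$ is generated by: reflexivity; $A\subseteq A',B\subseteq B'\Rightarrow A'\to B\subseteq A\to B'$; $A[G/v]\subseteq B\Rightarrow\forall vA\subseteq B$ ($G$ a term or formula as appropriate); $A\subseteq B\Rightarrow A\subseteq\forall vB$ ($v$ not free in $A$); $A\subseteq B[v/y]\Rightarrow A\subseteq B[w/y]$ for $v=w$ an instance of an equation of $\mathbf E$; transitivity; $D[\mu C\bar xD\langle\bar z\rangle/C(\bar z)][\bar t/\bar x]\subseteq\mu C\bar xD\langle\bar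 t\rangle$ and its converse; $D[E/C(\bar x)]\subseteq E\Rightarrow\mu C\bar xD\langle\bar t\rangle\subseteq E[\bar t/\bar x]$. Typing $\vdash_{TTR}$: variable axiom $\Gamma,x:A\vdash x:A$; $\to$-intro/elim; $\forall$-intro (variable not in context) and elimination (instantiating by terms / formulas) for first- and second-order variables; equational rule; subsumption along $\subseteq$; rule (Y): from $\Gamma\vdash t:\forall\bar x[C(\bar x)\to E]\to\forall\bar x[D\to E]$ infer $\Gamma\vdash(Y)t:\forall\bar x[\mu C\bar xD\langle\bar x\rangle\to E]$ ($C$ not free in $E$ nor in $\Gamma$, $Y$ Turing's fixed point combinator). $(x)u_1\dots u_n$ is iterated application; $\forall\mathbf v$ a sequence of quantifiers. *)

(* Defs.v *)
From Stdlib Require Import List Arith Bool.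
Import ListNotations.

(* First-order terms.  A function symbol is identified by its name and *)
(* its arity (= number of arguments), so every raw term is well formed. *)
Inductive fterm : Type :=
| FV (x : nat)
| FF (f : nat) (ts : list fterm).

Fixpoint tsubst (s : nat -> fterm) (t : fterm) : fterm :=
  match t with
  | FV x => s x
  | FF f ts => FF f (map (tsubst s) ts)
  end.

Fixpoint fv_t (t : fterm) : list nat :=
  match t with
  | FV x => [x]
  | FF _ ts => flat_map fv_t ts
  end.

(* Formulas (types).  Second-order (predicate) variables and predicate *)
(* symbols are identified by (name, arity); in an atom the arity is the *)
(* number of arguments.                                                *)
Inductive pk : Type := KVar | KSym.

Definition pk_eqb (a b : pk) : bool :=
  match a, b with KVar, KVar | KSym, KSym => true | _, _ => false end.

Inductive formula : Type :=
| Bot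
| Atom (k : pk) (P : nat) (ts : list fterm)
| Arr (A B : formula)
| All1 (x : nat) (A : formula)
| All2 (X n : nat) (A : formula)
| Mu (C : nat) (xs : list nat) (D : formula) (ts : list fterm).
    (* mu C x1..xn D <t1..tn>; binds C (arity n) and x1..xn in D *)

Definition pname : Type := (pk * nat * nat)%type.

Definition pn_eqb (p q : pname) : bool :=
  match p, q with
  | (k, P, n), (k', P', n') => pk_eqb k k' && (P =? P') && (n =? n')
  end.

Definition mem (x : nat) (l : list nat) : bool := existsb (Nat.eqb x) l.

Fixpoint fv1 (A : formula) : list nat :=
  match A with
  | Bot => []
  | Atom _ _ ts => flat_map fv_t ts
  | Arr A B => fv1 A ++ fv1 B
  | All1 y A => filter (fun z => negb (z =? y)) (fv1 A)
  | All2 _ _ A => fv1 A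
  | Mu _ xs D ts => filter (fun z => negb (mem z xs)) (fv1 D) ++ flat_map fv_t ts
  end.

Fixpoint fvp (A : formula) : list pname :=
  match A with
  | Bot => []
  | Atom k P ts => [(k, P, length ts)]
  | Arr A B => fvp A ++ fvp B
  | All1 _ A => fvp A
  | All2 Y m A => filter (fun p => negb (pn_eqb p (KVar, Y, m))) (fvp A)
  | Mu C xs D _ => filter (fun p => negb (pn_eqb p (KSym, C, length xs))) (fvp D)
  end.

Definition upd (s : nat -> fterm) (y : nat) (u : fterm) : nat -> fterm :=
  fun z => if z =? y then u else s z.

Fixpoint upds (s : nat -> fterm) (xs : list nat) (us : list fterm) : nat -> fterm :=
  match xs, us with
  | x :: xs', u :: us' => upd (upds s xs' us') x u
  | _, _ => s
  end.

Definition fresh (l : list nat) : nat := S (list_max l).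

Fixpoint fsub (s : nat -> fterm) (A : formula) : formula :=
  match A with
  | Bot => Bot
  | Atom k P ts => Atom k P (map (tsubst s) ts)
  | Arr A B => Arr (fsub s A) (fsub s B)
  | All1 y A =>
      let av := flat_map (fun z => fv_t (s z)) (filter (fun z => negb (z =? y)) (fv1 A)) in
      let y' := if mem y av then fresh (av ++ fv1 A) else y in
      All1 y' (fsub (upd s y (FV y')) A)
  | All2 X n A => All2 X n (fsub s A)
  | Mu C xs D ts =>
      let av := flat_map (fun z => fv_t (s z)) (filter (fun z => negb (mem z xs)) (fv1 D)) in
      let xs' := if existsb (fun x => mem x av) xs
                 then seq (fresh (av ++ fv1 D ++ xs)) (length xs) else xs in
      Mu C xs' (fsub (upds s xs (map FV xs')) D) (map (tsubst s) ts)
  end.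

(* An abstraction (x1..xn, F): a formula with n distinguished first-order
   variables, to be substituted for an n-ary predicate variable/symbol. *)
Definition abs : Type := (list nat * formula)%type.

Definition apply_abs (G : abs) (ts : list fterm) : formula :=
  fsub (upds FV (fst G) ts) (snd G).

Definition fv1_abs (G : abs) : list nat :=
  filter (fun z => negb (mem z (fst G))) (fv1 (snd G)).

Definition pnames (l : list pname) : list nat := map (fun p => snd (fst p)) l.

Definition ren_abs (k : pk) (Y' m : nat) : abs :=
  (seq 0 m, Atom k Y' (map FV (seq 0 m))).

Fixpoint psub (s1 : nat -> fterm) (s2 : pname -> option abs) (A : formula) : formula :=
  match A with
  | Bot => Bot
  | Atom k P ts =>
      let ts' := map (tsubst s1) ts in
      match s2 (k, P, length ts) with
      | Some G => apply_abs G ts'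
      | None => Atom k P ts'
      end
  | Arr A B => Arr (psub s1 s2 A) (psub s1 s2 B)
  | All1 y A =>
      let av := flat_map (fun z => fv_t (s1 z)) (filter (fun z => negb (z =? y)) (fv1 A))
             ++ flat_map (fun p => match s2 p with Some G => fv1_abs G | None => [] end)
                         (fvp A) in
      let y' := if mem y av then fresh (av ++ fv1 A) else y in
      All1 y' (psub (upd s1 y (FV y')) s2 A)
  | All2 Y m A =>
      let avp := flat_map (fun p => match s2 p with Some G => fvp (snd G) | None => [p] end)
                   (filter (fun p => negb (pn_eqb p (KVar, Y, m))) (fvp A)) in
      let Y' := if existsb (pn_eqb (KVar, Y, m)) avp
                then fresh (pnames avp ++ pnames (fvp A)) else Y in
      let s2' := fun p => if pn_eqb p (KVar, Y, m)
                          then (if Y' =? Y then None else Some (ren_abs KVar Y' m))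
                          else s2 p in
      All2 Y' m (psub s1 s2' A)
  | Mu C xs D ts =>
      let n := length xs in
      let fD := filter (fun p => negb (pn_eqb p (KSym, C, n))) (fvp D) in
      let av := flat_map (fun z => fv_t (s1 z)) (filter (fun z => negb (mem z xs)) (fv1 D))
             ++ flat_map (fun p => match s2 p with Some G => fv1_abs G | None => [] end) fD in
      let xs' := if existsb (fun x => mem x av) xs
                 then seq (fresh (av ++ fv1 D ++ xs)) n else xs in
      let avp := flat_map (fun p => match s2 p with Some G => fvp (snd G) | None => [p] end) fD in
      let C' := if existsb (pn_eqb (KSym, C, n)) avp
                then fresh (pnames avp ++ pnames (fvp D)) else C in
      let s2' := fun p => if pn_eqb p (KSym, C, n)
                          then (if C' =? C then None else Some (ren_abs KSym C' n))
                          else s2 p in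
      Mu C' xs' (psub (upds s1 xs (map FV xs')) s2' D) (map (tsubst s1) ts)
  end.

Definition subst1 (x : nat) (t : fterm) (A : formula) : formula := fsub (upd FV x t) A.
Definition simsub (xs : list nat) (ts : list fterm) (A : formula) : formula :=
  fsub (upds FV xs ts) A.
Definition subst2 (k : pk) (P n : nat) (G : abs) (A : formula) : formula :=
  psub FV (fun p => if pn_eqb p (k, P, n) then Some G else None) A.

(* pos_only neg c A : every free occurrence of the symbol c in A is positive
   (when neg = false) ; has no free occurrence at all in a position of the
   wrong polarity. *)
Fixpoint pos_only (neg : bool) (c : nat * nat) (A : formula) : bool :=
  match A with
  | Bot => true
  | Atom KVar _ _ => true
  | Atom KSym C ts => if (C =? fst c) && (length ts =? snd c) then negb neg else true
  | Arr A B => pos_only (negb neg) c A && pos_only neg c B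
  | All1 _ A => pos_only neg c A
  | All2 _ _ A => pos_only neg c A
  | Mu C xs D _ =>
      if (C =? fst c) && (length xs =? snd c) then true else pos_only neg c D
  end.

Definition positive (c : nat * nat) (A : formula) : bool := pos_only false c A.

Definition occurs (c : nat * nat) (A : formula) : Prop :=
  In (KSym, fst c, snd c) (fvp A).

Fixpoint wf (A : formula) : Prop :=
  match A with
  | Bot => True
  | Atom _ _ _ => True
  | Arr A B => wf A /\ wf B
  | All1 _ A => wf A
  | All2 _ _ A => wf A
  | Mu C xs D ts =>
      wf D /\ occurs (C, length xs) D /\ positive (C, length xs) D = true
      /\ NoDup xs /\ length ts = length xs
  end.

Definition wf_abs (n : nat) (G : abs) : Prop :=
  length (fst G) = n /\ NoDup (fst G) /\ wf (snd G).

Inductive qvar : Type :=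
| Q1 (x : nat)
| Q2 (X n : nat).

Definition freeq (q : qvar) (A : formula) : Prop :=
  match q with
  | Q1 x => In x (fv1 A)
  | Q2 X n => In (KVar, X, n) (fvp A)
  end.

Definition quant1 (q : qvar) (A : formula) : formula :=
  match q with Q1 x => All1 x A | Q2 X n => All2 X n A end.

Definition quant (vs : list qvar) (A : formula) : formula := fold_right quant1 A vs.

Definition all1s (xs : list nat) (A : formula) : formula := fold_right All1 A xs.

(* The fixed system of equations E: a list of pairs (l, r) standing for l = r.
   v = w is an instance of an equation of E. *)
Definition eq_instance (E : list (fterm * fterm)) (v w : fterm) : Prop :=
  exists (s : nat -> fterm) (l r : fterm), In (l, r) E /\ v = tsubst s l /\ w = tsubst s r.

Definition mu_unfold (C : nat) (xs : list nat) (D : formula) (ts : list fterm) : formula :=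
  simsub xs ts (subst2 KSym C (length xs) (xs, Mu C xs D (map FV xs)) D).

Inductive subty (E : list (fterm * fterm)) : formula -> formula -> Prop :=
| st_refl A : wf A -> subty E A A
| st_arr A A' B B' : subty E A A' -> subty E B B' -> subty E (Arr A' B) (Arr A B')
| st_all1_l x A t B :
    wf (All1 x A) -> subty E (subst1 x t A) B -> subty E (All1 x A) B
| st_all2_l X n A G B :
    wf (All2 X n A) -> wf_abs n G -> subty E (subst2 KVar X n G A) B ->
    subty E (All2 X n A) B
| st_all_r q A B :
    ~ freeq q A -> subty E A B -> subty E A (quant1 q B)
| st_eq A B y v w :
    eq_instance E v w -> wf (subst1 y w B) ->
    subty E A (subst1 y v B) -> subty E A (subst1 y w B)
| st_trans A B C : subty E A B -> subty E B C -> subty E A C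
| st_fold C xs D ts :
    wf (Mu C xs D ts) -> wf (mu_unfold C xs D ts) ->
    subty E (mu_unfold C xs D ts) (Mu C xs D ts)
| st_unfold C xs D ts :
    wf (Mu C xs D ts) -> wf (mu_unfold C xs D ts) ->
    subty E (Mu C xs D ts) (mu_unfold C xs D ts)
| st_ind C xs D ts F :
    wf (Mu C xs D ts) -> wf F -> wf (simsub xs ts F) ->
    subty E (subst2 KSym C (length xs) (xs, F) D) F ->
    subty E (Mu C xs D ts) (simsub xs ts F).

Inductive term : Type :=
| Var (x : nat)
| App (t u : term)
| Lam (x : nat) (t : term).

Definition apps (t : term) (us : list term) : term := fold_left App us t.

(* Turing's fixed point combinator  Y = (A)A,  A = \a\f (f)(a)a f *)
Definition TuringA : term :=
  Lam 0 (Lam 1 (App (Var 1) (App (App (Var 0) (Var 0)) (Var 1)))).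
Definition Ycomb : term := App TuringA TuringA.

Definition context : Type := list (nat * formula).

Fixpoint lookup (G : context) (x : nat) : option formula :=
  match G with
  | [] => None
  | (y, A) :: G' => if x =? y then Some A else lookup G' x
  end.

Definition free_ctx (q : qvar) (G : context) : Prop :=
  exists p, In p G /\ freeq q (snd p).

Definition psym_free_ctx (c : pname) (G : context) : Prop :=
  exists p, In p G /\ In c (fvp (snd p)).

Inductive typ (E : list (fterm * fterm)) : context -> term -> formula -> Prop :=
| ty_var G x A : lookup G x = Some A -> wf A -> typ E G (Var x) A
| ty_lam G x t A B : wf A -> typ E ((x, A) :: G) t B -> typ E G (Lam x t) (Arr A B)
| ty_app G t u A B : typ E G t (Arr A B) -> typ E G u A -> typ E G (App t u) B
| ty_all_i G t q A : ~ free_ctx q G -> typ E G t A -> typ E G t (quant1 q A)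
| ty_all1_e G t x A u :
    wf (subst1 x u A) -> typ E G t (All1 x A) -> typ E G t (subst1 x u A)
| ty_all2_e G t X n A F :
    wf_abs n F -> wf (subst2 KVar X n F A) ->
    typ E G t (All2 X n A) -> typ E G t (subst2 KVar X n F A)
| ty_eq G t A y v w :
    eq_instance E v w -> wf (subst1 y w A) ->
    typ E G t (subst1 y v A) -> typ E G t (subst1 y w A)
| ty_sub G t A B : subty E A B -> typ E G t A -> typ E G t B
| ty_Y G t C xs D F :
    ~ In (KSym, C, length xs) (fvp F) -> ~ psym_free_ctx (KSym, C, length xs) G ->
    wf (all1s xs (Arr (Mu C xs D (map FV xs)) F)) ->
    typ E G t (Arr (all1s xs (Arr (Atom KSym C (map FV xs)) F)) (all1s xs (Arr D F))) ->
    typ E G (App Ycomb t) (all1s xs (Arr (Mu C xs D (map FV xs)) F)).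

Definition not_free_seq (vs : list qvar) (A : formula) (G : context) : Prop :=
  forall q, In q vs -> ~ freeq q A /\ ~ free_ctx q G.

(* Main.v *)
Require Import Defs.
From Stdlib Require Import List Arith Bool Lia.
Import ListNotations.

Fixpoint tsubst_id (s : nat -> fterm) (H : forall z, s z = FV z) (t : fterm) {struct t}
  : tsubst s t = t :=
  match t return tsubst s t = t with
  | FV x => H x
  | FF f ts => f_equal (FF f) ((fix go (l : list fterm) : map (tsubst s) l = l :=
       match l return map (tsubst s) l = l with
       | [] => eq_refl
       | a :: l' => f_equal2 (@cons _) (tsubst_id s H a) (go l') end) ts)
  end.

Lemma map_tsubst_id s (H : forall z, s z = FV z) l : map (tsubst s) l = l.
Proof. induction l; simpl; [reflexivity| rewrite tsubst_id, IHl; auto]. Qed.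

Lemma flat_map_FV s (H : forall z, s z = FV z) l : flat_map (fun z => fv_t (s z)) l = l.
Proof. induction l; simpl; auto. rewrite H; simpl; rewrite IHl; auto. Qed.

Lemma flat_map_nil {X Y} (f : X -> list Y) l : (forall p, f p = []) -> flat_map f l = [].
Proof. intros H; induction l; simpl; auto. rewrite H, IHl; auto. Qed.

Lemma mem_filter_y y l : mem y (filter (fun z => negb (z =? y)) l) = false.
Proof.
  apply not_true_is_false; unfold mem; intros Hx.
  apply existsb_exists in Hx as [z [Hz Hz']].
  apply filter_In in Hz as [_ Hz]. apply Nat.eqb_eq in Hz'; subst.
  rewrite Nat.eqb_refl in Hz; discriminate.
Qed.

Lemma mem_In x l : mem x l = true <-> In x l.
Proof.
  unfold mem; rewrite existsb_exists; split.
  - intros [z [Hz Hz']]; apply Nat.eqb_eq in Hz'; subst; auto.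
  - intros; exists x; rewrite Nat.eqb_refl; auto.
Qed.

Lemma exists_mem_filter xs l :
  existsb (fun x => mem x (filter (fun z => negb (mem z xs)) l)) xs = false.
Proof.
  apply not_true_is_false; intros Hx.
  apply existsb_exists in Hx as [z [Hz Hz']].
  apply mem_In, filter_In in Hz' as [_ Hz'].
  assert (mem z xs = true) by (apply mem_In; auto).
  rewrite H in Hz'; discriminate.
Qed.

Lemma upd_id s y (H : forall z, s z = FV z) : forall z, upd s y (FV y) z = FV z.
Proof. intros z; unfold upd; destruct (Nat.eqb_spec z y); subst; auto. Qed.

Lemma upds_id s xs (H : forall z, s z = FV z) : forall z, upds s xs (map FV xs) z = FV z.
Proof. induction xs; simpl; auto. apply upd_id; auto. Qed.

Lemma fsub_id A : forall s, (forall z, s z = FV z) -> fsub s A = A.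
Proof.
  induction A; intros s H; simpl.
  - auto.
  - rewrite map_tsubst_id; auto.
  - rewrite IHA1, IHA2; auto.
  - rewrite flat_map_FV by auto. rewrite mem_filter_y.
    rewrite IHA; auto. apply upd_id; auto.
  - rewrite IHA; auto.
  - rewrite flat_map_FV by auto. rewrite exists_mem_filter.
    rewrite IHA, map_tsubst_id; auto. apply upds_id; auto.
Qed.

Lemma pn_eqb_eq p q : pn_eqb p q = true <-> p = q.
Proof.
  destruct p as [[k P] n], q as [[k' P'] n']; simpl.
  rewrite !andb_true_iff, !Nat.eqb_eq.
  destruct k, k'; simpl; split; intuition congruence.
Qed.

Lemma pn_eqb_refl p : pn_eqb p p = true.
Proof. apply pn_eqb_eq; auto. Qed.

Definition idish (s2 : pname -> option abs) :=
  forall p, s2 p = None \/ s2 p = Some (ren_abs (fst (fst p)) (snd (fst p)) (snd p)).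

Lemma upds_map : forall xs us s, NoDup xs -> length xs = length us -> map (upds s xs us) xs = us.
Proof.
  induction xs as [|x xs IH]; intros [|u us] s Hnd Hl; simpl in *; try lia; auto.
  inversion Hnd; subst.
  unfold upd at 1; rewrite Nat.eqb_refl. f_equal.
  rewrite <- (IH us s) at 2 by (auto; lia).
  apply map_ext_in. intros y Hy. unfold upd.
  destruct (Nat.eqb_spec y x); subst; tauto.
Qed.

Lemma flat_map_FV' l : flat_map fv_t (map FV l) = l.
Proof. induction l; simpl; auto. rewrite IHl; auto. Qed.



Lemma fv1_abs_ren k P m : fv1_abs (ren_abs k P m) = [].
Proof.
  unfold fv1_abs, ren_abs; simpl. rewrite flat_map_FV'.
  remember (seq 0 m) as l; clear Heql.
  destruct (filter _ l) eqn:E; auto.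
  assert (In n (filter (fun z => negb (mem z l)) l)) by (rewrite E; left; auto).
  apply filter_In in H as [H1 H2]. assert (mem n l = true) by (apply mem_In; auto).
  rewrite H in H2; discriminate.
Qed.

Lemma av2_nil s2 l : idish s2 ->
  flat_map (fun p => match s2 p with Some G => fv1_abs G | None => [] end) l = [].
Proof.
  intros H; apply flat_map_nil; intros p.
  destruct (H p) as [E|E]; rewrite E; auto. apply fv1_abs_ren.
Qed.

Lemma avp_id s2 l : idish s2 ->
  flat_map (fun p => match s2 p with Some G => fvp (snd G) | None => [p] end) l = l.
Proof.
  intros H; induction l; simpl; auto. rewrite IHl.
  destruct (H a) as [E|E]; rewrite E; auto. simpl.
  rewrite length_map, length_seq. destruct a as [[k P] m]; auto.
Qed.

Lemma exists_pn_filter q l :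
  existsb (pn_eqb q) (filter (fun p => negb (pn_eqb p q)) l) = false.
Proof.
  apply not_true_is_false; intros Hx.
  apply existsb_exists in Hx as [z [Hz Hz']].
  apply filter_In in Hz as [_ Hz]. apply pn_eqb_eq in Hz'; subst.
  rewrite pn_eqb_refl in Hz; discriminate.
Qed.

Lemma idish_upd s2 q : idish s2 ->
  idish (fun p => if pn_eqb p q then (if snd (fst q) =? snd (fst q) then None
                   else Some (ren_abs (fst (fst q)) (snd (fst q)) (snd q))) else s2 p).
Proof.
  intros H p. destruct (pn_eqb p q); auto. rewrite Nat.eqb_refl; auto.
Qed.

Lemma psub_id A : forall s1 s2, (forall z, s1 z = FV z) -> idish s2 -> psub s1 s2 A = A.
Proof.
  induction A; intros s1 s2 H1 H2; simpl.
  - auto.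
  - rewrite map_tsubst_id by auto.
    destruct (H2 (k, P, length ts)) as [E|E]; rewrite E; auto.
    unfold apply_abs, ren_abs; simpl. rewrite map_map. simpl.
    f_equal. apply upds_map. apply seq_NoDup. rewrite length_seq; auto.
  - rewrite IHA1, IHA2; auto.
  - rewrite flat_map_FV by auto. rewrite av2_nil by auto. rewrite app_nil_r.
    rewrite mem_filter_y. rewrite IHA; auto. apply upd_id; auto.
  - rewrite avp_id by auto. rewrite exists_pn_filter.
    rewrite IHA; auto.
    apply (idish_upd s2 (KVar, X, n) H2).
  - rewrite flat_map_FV by auto. rewrite av2_nil by auto. rewrite app_nil_r.
    rewrite exists_mem_filter. rewrite avp_id by auto. rewrite exists_pn_filter.
    rewrite IHA, map_tsubst_id; auto.
    apply upds_id; auto.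
    apply (idish_upd s2 (KSym, C, length xs) H2).
Qed.

Lemma subty_wf E A B : subty E A B -> wf A /\ wf B.
Proof.
  induction 1; simpl in *; try tauto; try (destruct q; simpl; tauto).
Qed.

Lemma typ_wf E G t A : typ E G t A -> wf A.
Proof.
  induction 1; simpl in *; try tauto; try (destruct q; simpl; tauto).
  apply subty_wf in H; tauto.
Qed.

Lemma subty_quant1 E q Y T : subty E Y T -> subty E (quant1 q Y) (quant1 q T).
Proof.
  intros H. pose proof (subty_wf _ _ _ H) as [HY HT].
  apply st_all_r.
  - destruct q; simpl; intros Hin.
    + apply filter_In in Hin as [_ Hin]; rewrite Nat.eqb_refl in Hin; discriminate.
    + apply filter_In in Hin as [_ Hin]; rewrite pn_eqb_refl in Hin; discriminate.
  - destruct q as [y|X n]; simpl.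
    + apply st_all1_l with (t := FV y); auto.
      unfold subst1; rewrite fsub_id; auto. apply upd_id; auto.
    + apply st_all2_l with (G := ren_abs KVar X n); auto.
      * unfold wf_abs, ren_abs; simpl; repeat split; auto.
        apply length_seq. apply seq_NoDup.
      * unfold subst2; rewrite psub_id; auto.
        intros p. destruct (pn_eqb p (KVar, X, n)) eqn:Ep; auto.
        apply pn_eqb_eq in Ep; subst; simpl; auto.
Qed.

Lemma apps_snoc t us u : apps t (us ++ [u]) = App (apps t us) u.
Proof. unfold apps; rewrite fold_left_app; reflexivity. Qed.

Lemma apps_inv x us :
  (us = [] /\ apps (Var x) us = Var x) \/
  (exists us' u, us = us' ++ [u] /\ apps (Var x) us = App (apps (Var x) us') u).
Proof.
  destruct us using rev_ind; auto.
  right; exists us, x0; split; auto. apply apps_snoc.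
Qed.

Lemma apps_not_lam x us y t : apps (Var x) us <> Lam y t.
Proof.
  destruct (apps_inv x us) as [[_ E]|[us' [u [_ E]]]]; rewrite E; discriminate.
Qed.

Lemma apps_not_Y x us t : apps (Var x) us <> App Ycomb t.
Proof.
  intros H.
  destruct (apps_inv x us) as [[_ E]|[us' [u [_ E]]]]; rewrite E in H; try discriminate.
  injection H as H _.
  destruct (apps_inv x us') as [[_ E']|[us2 [u2 [_ E']]]]; rewrite E' in H; try discriminate.
  injection H as H _.
  eapply apps_not_lam; eauto.
Qed.

Section Chain.
Variable E : list (fterm * fterm).
Variable G : context.
Variable x : nat.
Variable A : formula.

Inductive chain : list term -> formula -> Prop :=
| ch0 v T : not_free_seq v A G -> subty E (quant v A) T -> chain [] T
| chS us u C B' v T : chain us (Arr C B') -> typ E ((x, A) :: G) u C ->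
    not_free_seq v A G -> subty E (quant v B') T -> chain (us ++ [u]) T.

Lemma chain_sub us T T' : chain us T -> subty E T T' -> chain us T'.
Proof.
  intros H; destruct H; intros Hs.
  - eapply ch0; eauto. eapply st_trans; eauto.
  - eapply chS; eauto. eapply st_trans; eauto.
Qed.

Lemma chain_quant us T q : chain us T -> ~ free_ctx q ((x, A) :: G) -> chain us (quant1 q T).
Proof.
  intros H Hq.
  assert (Hq' : ~ freeq q A /\ ~ free_ctx q G).
  { split; intros Hc; apply Hq.
    - exists (x, A); simpl; auto.
    - destruct Hc as [p [Hp Hf]]; exists p; simpl; auto. }
  destruct H.
  - apply ch0 with (v := q :: v).
    + intros q' [<-|Hi]; auto.
    + simpl. apply subty_quant1; auto.
  - apply chS with (C := C) (B' := B') (v := q :: v); auto.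
    + intros q' [<-|Hi]; auto.
    + simpl. apply subty_quant1; auto.
Qed.

Lemma gen_chain Γ t T : typ E Γ t T -> forall us, Γ = (x, A) :: G -> t = apps (Var x) us ->
  chain us T.
Proof.
  induction 1; intros us HΓ Ht; subst.
  - destruct (apps_inv x us) as [[-> E']|[us' [u [_ E']]]]; rewrite E' in Ht; try discriminate.
    injection Ht as ->. simpl in H; rewrite Nat.eqb_refl in H. injection H as HH; subst.
    apply ch0 with (v := []). intros _ [].
    simpl. apply st_refl; auto.
  - exfalso; eapply apps_not_lam; eauto.
  - destruct (apps_inv x us) as [[-> E']|[us' [u' [-> E']]]]; rewrite E' in Ht; try discriminate.
    injection Ht as H1 H2; subst.
    apply chS with (C := A0) (B' := B) (v := []); auto.
    intros _ [].
    simpl. apply st_refl. apply typ_wf in H. simpl in H; tauto.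
  - apply chain_quant; auto.
  - eapply chain_sub; eauto. apply st_all1_l with (t := u).
    apply typ_wf in H0; auto. apply st_refl; auto.
  - eapply chain_sub; eauto. apply st_all2_l with (G := F); auto.
    apply typ_wf in H1; auto. apply st_refl; auto.
  - eapply chain_sub; eauto. apply st_eq with (v := v); auto.
    apply st_refl. apply typ_wf in H1; auto.
  - eapply chain_sub; eauto.
  - exfalso; eapply apps_not_Y; eauto.
Qed.

Lemma chain_nth us T : chain us T ->
  let n := length us in
  exists Cs Bs vs, length Cs = n /\ length Bs = n /\ length vs = S n /\
    (forall i, i <= n -> not_free_seq (nth i vs []) A G) /\
    (forall i, i < n -> subty E (quant (nth i vs []) (nth i (A :: Bs) Bot))
                                (Arr (nth i Cs Bot) (nth i Bs Bot))) /\
    subty E (quant (nth n vs []) (nth n (A :: Bs) Bot)) T /\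
    (forall i, i < n -> typ E ((x, A) :: G) (nth i us (Var 0)) (nth i Cs Bot)).
Proof.
  induction 1; cbv zeta.
  - exists [], [], [v]. simpl. split; [|split;[|split;[|split;[|split;[|split]]]]]; auto; intros; try lia.
    destruct i; [exact H|lia].
  - destruct IHchain as (Cs & Bs & vs & HC & HB & Hv & Hnf & Hs & Hl & Ht).
    exists (Cs ++ [C]), (Bs ++ [B']), (vs ++ [v]).
    rewrite !length_app. simpl length.
    split; [lia|]. split; [lia|]. split; [lia|].
    split; [|split; [|split]].
    + intros i Hi. destruct (Nat.eq_dec i (S (length us))).
      * subst. rewrite app_nth2 by lia. rewrite Hv.
        replace (S (length us) - S (length us)) with 0 by lia. exact H1.
      * rewrite app_nth1 by lia. apply Hnf; lia.
    + intros i Hi. rewrite app_comm_cons.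
      destruct (Nat.eq_dec i (length us)).
      * subst. rewrite (app_nth1 vs) by lia. rewrite (app_nth1 (A :: Bs)) by (simpl; lia).
        rewrite !app_nth2 by lia. rewrite HC, HB, Nat.sub_diag. exact Hl.
      * rewrite !app_nth1 by (simpl; lia). apply Hs; lia.
    + rewrite app_comm_cons. rewrite !app_nth2 by (simpl; lia).
      simpl length. rewrite Hv, HB.
      replace (length us + 1 - S (length us)) with 0 by lia. exact H2.
    + intros i Hi. destruct (Nat.eq_dec i (length us)).
      * subst. rewrite !app_nth2 by lia. rewrite HC, Nat.sub_diag; auto.
      * rewrite !app_nth1 by lia. apply Ht; lia.
Qed.
End Chain.

Theorem corollary4p1 (E : list (fterm * fterm)) (G : context) (x : nat)
    (A B : formula) (us : list term) :
  typ E ((x, A) :: G) (apps (Var x) us) B ->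
  let n := length us in
  (n = 0 /\
     exists v0 : list qvar, not_free_seq v0 A G /\ subty E (quant v0 A) B)
  \/
  (1 <= n /\
     exists (Cs Bs : list formula) (vs : list (list qvar)),
       length Cs = n /\ length Bs = n /\ length vs = S n /\
       (forall i, i <= n -> not_free_seq (nth i vs []) A G) /\
       subty E (quant (nth 0 vs []) A) (Arr (nth 0 Cs Bot) (nth 0 Bs Bot)) /\
       (forall i, 1 <= i <= n - 1 ->
          subty E (quant (nth i vs []) (nth (i - 1) Bs Bot))
                  (Arr (nth i Cs Bot) (nth i Bs Bot))) /\
       subty E (quant (nth n vs []) (nth (n - 1) Bs Bot)) B /\
       (forall i, i < n -> typ E ((x, A) :: G) (nth i us (Var 0)) (nth i Cs Bot))).
Proof.
  intros Ht n.
  pose proof (gen_chain E G x A _ _ _ Ht us eq_refl eq_refl) as Hc.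
  apply chain_nth in Hc. cbv zeta in Hc.
  destruct Hc as (Cs & Bs & vs & HC & HB & Hv & Hnf & Hs & Hl & Hty).
  unfold n; clear n.
  destruct (length us) as [|m] eqn:Hn.
  - left; split; auto. exists (nth 0 vs []); split; auto.
  - right; split; [lia|]. exists Cs, Bs, vs.
    split; [auto|]. split; [auto|]. split; [auto|]. split; [auto|].
    split; [apply (Hs 0); lia|].
    split; [|split; [|auto]].
    + intros i Hi. destruct i as [|j]; [lia|].
      replace (S j - 1) with j by lia. apply (Hs (S j)); lia.
    + replace (S m - 1) with m by lia. exact Hl.
Qed.
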